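(* Let $n\ge 2$ and $x_0\in\mathbb{R}$. Then $$\psi(x_0+iy)=A\,|y|\,(1+o(1)),\qquad y\to 0,\ y\neq 0,$$ where $$A=\int_{\widetilde D_{x_0}}\left|\sum_{k=1}^{n-1}k(k+1)t_kx_0^{k-1}\right|^2dt_1\dots dt_{n-1},$$ and $\widetilde D_{x_0}$ is the set of $(t_1,\dots,t_{n-1})\in\mathbb{R}^{n-1}$ with $\max_{1\le k\le n-1}|t_k|\le1$, $\left|\sum_{k=1}^{n-1}kt_kx_0^{k+1}\right|\le1$ and $\left|\sum_{k=1}^{n-1}(k+1)t_kx_0^{k}\right|\le1$.
   Context: For $z\in\mathbb{C}\setminus\mathbb{R}$, let $D_z$ be the set of $(t_1,\dots,t_{n-1})\in\mathbb{R}^{n-1}$ with $\max_{1\le k\le n-1}|t_k|\le 1$, $\left|z\sum_{k=1}^{n-1}t_k\left(z^k-\frac{\Im z^{k+1}}{\Im z}\right)\right|\le 1$ and $\left|\frac{1}{\Im z}\sum_{k=1}^{n-1}t_k\Im z^{k+1}\right|\le 1$, and define $$\psi(z)=\frac{1}{|\Im z|}\int_{D_z}\left|\sum_{k=1}^{n-1}t_k\left((k+1)z^{k}-\frac{\Im z^{k+1}}{\Im z}\right)\right|^2dt_1\dots dt_{n-1}.$$ *)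

(* Defs.v *)
From Stdlib Require Import Reals Lra Lia ClassicalEpsilon.
Open Scope R_scope.

Definition C := (R * R)%type.
Definition cadd (z w : C) : C := (fst z + fst w, snd z + snd w).
Definition csub (z w : C) : C := (fst z - fst w, snd z - snd w).
Definition cmul (z w : C) : C :=
  (fst z * fst w - snd z * snd w, fst z * snd w + snd z * fst w).
Definition cscal (a : R) (z : C) : C := (a * fst z, a * snd z).
Definition cofR (a : R) : C := (a, 0).
Definition cnorm (z : C) : R := sqrt (fst z ^ 2 + snd z ^ 2).
Definition Im (z : C) : R := snd z.
Fixpoint cpow (z : C) (k : nat) : C :=
  match k with O => (1, 0) | S k' => cmul z (cpow z k') end.

Fixpoint sumR1 (m : nat) (g : nat -> R) : R :=
  match m with O => 0 | S m' => sumR1 m' g + g (S m') end.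
Fixpoint sumC1 (m : nat) (g : nat -> C) : C :=
  match m with O => (0, 0) | S m' => cadd (sumC1 m' g) (g (S m')) end.
Fixpoint sumN (N : nat) (g : nat -> R) : R :=
  match N with O => 0 | S N' => sumN N' g + g N' end.

Definition rle (a b : R) : bool := if Rle_dec a b then true else false.

Fixpoint box_ok (m : nat) (t : nat -> R) : bool :=
  match m with O => true | S m' => andb (box_ok m' t) (rle (Rabs (t (S m'))) 1) end.

(* ---------- Riemann integral over [-1,1]^m (coordinates t 1, ..., t m) ----------
   Defined as the limit of midpoint Riemann sums on the uniform grid with
   N subdivisions per axis (for Riemann-integrable integrands this equals the
   Lebesgue integral). *)
Definition upd (t : nat -> R) (k : nat) (v : R) : nat -> R :=
  fun i => if Nat.eqb i k then v else t i.
Definition gpt (N j : nat) : R := -1 + (INR j + /2) * (2 / INR N).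
Fixpoint gsum (m N : nat) (f : (nat -> R) -> R) : R :=
  match m with
  | O => f (fun _ => 0)
  | S m' => sumN N (fun j => gsum m' N (fun t => f (upd t (S m') (gpt N j))))
  end.
Definition riemann_sum (m N : nat) (f : (nat -> R) -> R) : R :=
  (2 / INR N) ^ m * gsum m N f.
Definition box_integral (m : nat) (f : (nat -> R) -> R) : R :=
  epsilon (inhabits 0) (fun I => Un_cv (fun N => riemann_sum m (S N) f) I).

Definition Dz_ok (n : nat) (z : C) (t : nat -> R) : bool :=
  let m := (n - 1)%nat in
  andb (box_ok m t)
  (andb (rle (cnorm (cmul z (sumC1 m (fun k =>
            cscal (t k) (csub (cpow z k) (cofR (Im (cpow z (S k)) / Im z))))))) 1)
        (rle (Rabs (/ Im z * sumR1 m (fun k => t k * Im (cpow z (S k))))) 1)).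

Definition psi_integrand (n : nat) (z : C) (t : nat -> R) : R :=
  let m := (n - 1)%nat in
  cnorm (sumC1 m (fun k =>
     cscal (t k) (csub (cscal (INR (S k)) (cpow z k))
                       (cofR (Im (cpow z (S k)) / Im z))))) ^ 2.

Definition psi (n : nat) (x y : R) : R :=
  let z : C := (x, y) in
  / Rabs (Im z) *
  box_integral (n - 1) (fun t => if Dz_ok n z t then psi_integrand n z t else 0).

Definition Dtilde_ok (n : nat) (x0 : R) (t : nat -> R) : bool :=
  let m := (n - 1)%nat in
  andb (box_ok m t)
  (andb (rle (Rabs (sumR1 m (fun k => INR k * t k * x0 ^ (S k)))) 1)
        (rle (Rabs (sumR1 m (fun k => INR (S k) * t k * x0 ^ k))) 1)).

Definition A_const (n : nat) (x0 : R) : R :=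
  box_integral (n - 1) (fun t =>
    if Dtilde_ok n x0 t
    then (Rabs (sumR1 (n - 1) (fun k => INR k * INR (S k) * t k * x0 ^ (k - 1)))) ^ 2
    else 0).

(* Main.v *)
Require Import Defs.
From Stdlib Require Import Reals Lra Lia ClassicalEpsilon FunctionalExtensionality.
Open Scope R_scope.
Open Scope bool_scope.
Open Scope R_scope.

Definition ind (b : bool) : R := if b then 1 else 0.

Lemma ind_bounds b : 0 <= ind b <= 1.
Proof. destruct b; simpl; lra. Qed.

Lemma rle_true a b : rle a b = true <-> a <= b.
Proof. unfold rle; destruct (Rle_dec a b); split; intros; auto; try discriminate; lra. Qed.
Lemma rle_false a b : rle a b = false <-> b < a.
Proof. unfold rle; destruct (Rle_dec a b); split; intros; auto; try discriminate; lra. Qed.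

Lemma sumN_ext N f g : (forall j, (j < N)%nat -> f j = g j) -> sumN N f = sumN N g.
Proof. induction N; simpl; intros H; auto. rewrite IHN by (intros; apply H; lia). rewrite H by lia; auto. Qed.
Lemma sumN_le N f g : (forall j, (j < N)%nat -> f j <= g j) -> sumN N f <= sumN N g.
Proof. induction N; simpl; intros H; [lra|]. assert (H1 := H N ltac:(lia)). assert (sumN N f <= sumN N g) by (apply IHN; intros; apply H; lia). lra. Qed.
Lemma sumN_plus N f g : sumN N (fun j => f j + g j) = sumN N f + sumN N g.
Proof. induction N; simpl; [ring|]. rewrite IHN; ring. Qed.
Lemma sumN_minus N f g : sumN N (fun j => f j - g j) = sumN N f - sumN N g.
Proof. induction N; simpl; [ring|]. rewrite IHN; ring. Qed.
Lemma sumN_scal N c f : sumN N (fun j => c * f j) = c * sumN N f.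
Proof. induction N; simpl; [ring|]. rewrite IHN; ring. Qed.
Lemma sumN_const N c : sumN N (fun _ => c) = INR N * c.
Proof. induction N; simpl sumN; [simpl; ring|]. rewrite IHN, S_INR; ring. Qed.
Lemma sumN_abs N f : Rabs (sumN N f) <= sumN N (fun j => Rabs (f j)).
Proof. induction N; simpl; [rewrite Rabs_R0; lra|]. eapply Rle_trans; [apply Rabs_triang|]. lra. Qed.
Lemma sumN_add a b f : sumN (a + b) f = sumN a f + sumN b (fun i => f (a + i)%nat).
Proof. induction b; simpl. rewrite Nat.add_0_r; ring. rewrite Nat.add_succ_r; simpl; rewrite IHb; ring. Qed.
Lemma sumN_mul N M f : sumN (N * M) f = sumN N (fun j => sumN M (fun i => f (j * M + i)%nat)).
Proof.
  induction N; simpl; auto. rewrite Nat.add_comm, sumN_add, IHN.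
  f_equal.
Qed.

Lemma sumR1_ext m f g : (forall k, (1 <= k <= m)%nat -> f k = g k) -> sumR1 m f = sumR1 m g.
Proof. induction m; simpl; intros H; auto. rewrite IHm by (intros; apply H; lia). rewrite H by lia; auto. Qed.
Lemma sumR1_le m f g : (forall k, (1 <= k <= m)%nat -> f k <= g k) -> sumR1 m f <= sumR1 m g.
Proof. induction m; simpl; intros H; [lra|]. assert (H1 := H (S m) ltac:(lia)). assert (sumR1 m f <= sumR1 m g) by (apply IHm; intros; apply H; lia). lra. Qed.
Lemma sumR1_plus m f g : sumR1 m (fun j => f j + g j) = sumR1 m f + sumR1 m g.
Proof. induction m; simpl; [ring|]. rewrite IHm; ring. Qed.
Lemma sumR1_minus m f g : sumR1 m (fun j => f j - g j) = sumR1 m f - sumR1 m g.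
Proof. induction m; simpl; [ring|]. rewrite IHm; ring. Qed.
Lemma sumR1_scal m c f : sumR1 m (fun j => c * f j) = c * sumR1 m f.
Proof. induction m; simpl; [ring|]. rewrite IHm; ring. Qed.
Lemma sumR1_abs m f : Rabs (sumR1 m f) <= sumR1 m (fun j => Rabs (f j)).
Proof. induction m; simpl; [rewrite Rabs_R0; lra|]. eapply Rle_trans; [apply Rabs_triang|]. lra. Qed.
Lemma sumR1_nonneg m f : (forall k, (1 <= k <= m)%nat -> 0 <= f k) -> 0 <= sumR1 m f.
Proof. intros H. replace 0 with (sumR1 m (fun _ => 0)). apply sumR1_le; auto.
  clear H; induction m; simpl; auto; rewrite IHm; ring. Qed.

Lemma Rabs_le_inv x a : Rabs x <= a -> -a <= x <= a.
Proof. intros H. pose proof (Rle_abs x). pose proof (Rle_abs (-x)). rewrite Rabs_Ropp in H1. lra. Qed.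
Lemma INR_pos N : (1 <= N)%nat -> 0 < INR N.
Proof. intros; apply lt_0_INR; lia. Qed.

Lemma div_le_mono a b c : 0 < c -> a <= b -> a / c <= b / c.
Proof. intros; unfold Rdiv; apply Rmult_le_compat_r; auto. left; apply Rinv_0_lt_compat; auto. Qed.

Lemma gpt_S N K : (1 <= N)%nat -> gpt N (S K) = gpt N K + 2 / INR N.
Proof. intros; unfold gpt; rewrite S_INR; ring. Qed.
Lemma gpt_0 N : (1 <= N)%nat -> gpt N 0 = -1 + / INR N.
Proof. intros; unfold gpt; simpl INR; assert (0 < INR N) by (apply INR_pos; auto); field; lra. Qed.
Lemma gpt_N N : (1 <= N)%nat -> gpt N N = 1 + / INR N.
Proof. intros; unfold gpt; assert (0 < INR N) by (apply INR_pos; auto); field; lra. Qed.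

Lemma gpt_bound N j : (j < N)%nat -> Rabs (gpt N j) <= 1 - / INR N.
Proof.
  intros H. assert (Hn : 0 < INR N) by (apply INR_pos; lia).
  assert (Hj : INR j + 1 <= INR N) by (rewrite <- S_INR; apply le_INR; lia).
  assert (Hj0 : 0 <= INR j) by apply pos_INR.
  assert (E : gpt N j = -1 + (2 * INR j + 1) / INR N) by (unfold gpt; field; lra).
  rewrite E. apply Rabs_le. split.
  - assert (1 / INR N <= (2 * INR j + 1) / INR N) by (apply div_le_mono; lra).
    unfold Rdiv in *; lra.
  - assert ((2 * INR j + 1) / INR N <= (2 * INR N - 1) / INR N) by (apply div_le_mono; lra).
    assert ((2 * INR N - 1) / INR N = 2 - / INR N) by (field; lra). lra.
Qed.

Lemma gpt_refine N M j i : (j < N)%nat -> (i < M)%nat ->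
  Rabs (gpt (N * M) (j * M + i) - gpt N j) <= / INR N.
Proof.
  intros Hj Hi. assert (Hn : 0 < INR N) by (apply INR_pos; lia).
  assert (Hm : 0 < INR M) by (apply INR_pos; lia).
  assert (Hi' : INR i + 1 <= INR M) by (rewrite <- S_INR; apply le_INR; lia).
  assert (Hi0 : 0 <= INR i) by apply pos_INR.
  assert (E : gpt (N * M) (j * M + i) - gpt N j = (2 * INR i + 1 - INR M) / (INR N * INR M)).
  { unfold gpt. rewrite plus_INR, !mult_INR. field; lra. }
  rewrite E. unfold Rdiv. rewrite Rabs_mult, (Rabs_right (/ _)).
  2: { left; apply Rinv_0_lt_compat; nra. }
  assert (Rabs (2 * INR i + 1 - INR M) <= INR M) by (apply Rabs_le; lra).
  apply Rle_trans with (INR M * / (INR N * INR M)).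
  apply Rmult_le_compat_r; auto. left; apply Rinv_0_lt_compat; nra.
  right; field; lra.
Qed.

Lemma upd_eq t k v : upd t k v k = v.
Proof. unfold upd; rewrite Nat.eqb_refl; auto. Qed.
Lemma upd_neq t k v i : i <> k -> upd t k v i = t i.
Proof. intros; unfold upd; destruct (Nat.eqb_spec i k); auto; lia. Qed.
Lemma upd_comm t i k a b : i <> k -> upd (upd t i a) k b = upd (upd t k b) i a.
Proof.
  intros H; apply functional_extensionality; intros x; unfold upd.
  destruct (Nat.eqb_spec x k), (Nat.eqb_spec x i); auto; lia.
Qed.
Lemma upd_same t k : upd t k (t k) = t.
Proof. apply functional_extensionality; intros x; unfold upd; destruct (Nat.eqb_spec x k); subst; auto. Qed.

Definition inner (N m : nat) (t : nat -> R) :=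
  forall k, (1 <= k <= m)%nat -> Rabs (t k) <= 1 - / INR N.
Definition near (N m : nat) (t s : nat -> R) :=
  (forall k, (1 <= k <= m)%nat -> Rabs (s k - t k) <= / INR N) /\
  (forall k, ~ (1 <= k <= m)%nat -> s k = t k).

Lemma inner_upd N m t j : inner N m t -> (j < N)%nat -> inner N (S m) (upd t (S m) (gpt N j)).
Proof.
  intros H Hj k Hk. destruct (Nat.eq_dec k (S m)).
  - subst; rewrite upd_eq; apply gpt_bound; auto.
  - rewrite upd_neq by auto; apply H; lia.
Qed.

Lemma near_upd N m t s a b : near N m t s -> Rabs (b - a) <= / INR N ->
  near N (S m) (upd t (S m) a) (upd s (S m) b).
Proof.
  intros [H1 H2] Hab; split.
  - intros k Hk. destruct (Nat.eq_dec k (S m)).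
    + subst; rewrite !upd_eq; auto.
    + rewrite !upd_neq by auto; apply H1; lia.
  - intros k Hk. rewrite !upd_neq by lia. apply H2; lia.
Qed.

Lemma near_refl N m t : (1 <= N)%nat -> near N m t t.
Proof. intros HN; split; intros; auto. unfold Rminus; rewrite Rplus_opp_r, Rabs_R0.
  left; apply Rinv_0_lt_compat, INR_pos; auto. Qed.

Lemma inner_box N m t : (1 <= N)%nat -> inner N m t -> forall k, (1 <= k <= m)%nat -> Rabs (t k) <= 1.
Proof. intros HN H k Hk. assert (0 < / INR N) by (apply Rinv_0_lt_compat, INR_pos; auto). specialize (H k Hk); lra. Qed.

Lemma gsum_le m : forall N f g, (forall t, inner N m t -> f t <= g t) -> gsum m N f <= gsum m N g.
Proof.
  induction m; intros N f g H; simpl.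
  - apply H. intros k Hk; lia.
  - apply sumN_le; intros j Hj. apply IHm. intros t Ht. apply H. apply inner_upd; auto.
Qed.
Lemma gsum_plus m : forall N f g, gsum m N (fun t => f t + g t) = gsum m N f + gsum m N g.
Proof. induction m; intros; simpl; auto. rewrite <- sumN_plus. apply sumN_ext; intros; apply IHm. Qed.
Lemma gsum_scal m : forall N c f, gsum m N (fun t => c * f t) = c * gsum m N f.
Proof. induction m; intros; simpl; auto. rewrite <- sumN_scal. apply sumN_ext; intros; apply IHm. Qed.
Lemma gsum_const m N c : gsum m N (fun _ => c) = INR N ^ m * c.
Proof. induction m; simpl; [ring|]. rewrite sumN_const, IHm; ring. Qed.

Definition hN (N : nat) := 2 / INR N.

Lemma RS_le m N f g : (1 <= N)%nat -> (forall t, inner N m t -> f t <= g t) ->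
  riemann_sum m N f <= riemann_sum m N g.
Proof. intros HN H. unfold riemann_sum. apply Rmult_le_compat_l.
  apply pow_le. unfold Rdiv; assert (0 < / INR N) by (apply Rinv_0_lt_compat, INR_pos; auto); lra.
  apply gsum_le; auto. Qed.
Lemma RS_plus m N f g : riemann_sum m N (fun t => f t + g t) = riemann_sum m N f + riemann_sum m N g.
Proof. unfold riemann_sum; rewrite gsum_plus; ring. Qed.
Lemma RS_scal m N c f : riemann_sum m N (fun t => c * f t) = c * riemann_sum m N f.
Proof. unfold riemann_sum; rewrite gsum_scal; ring. Qed.
Lemma RS_const m N c : (1 <= N)%nat -> riemann_sum m N (fun _ => c) = 2 ^ m * c.
Proof. intros HN; unfold riemann_sum; rewrite gsum_const.
  rewrite <- Rmult_assoc, <- Rpow_mult_distr. assert (0 < INR N) by (apply INR_pos; auto).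
  replace (2 / INR N * INR N) with 2 by (field; lra). auto. Qed.
Lemma RS_minus m N f g : riemann_sum m N (fun t => f t - g t) = riemann_sum m N f - riemann_sum m N g.
Proof. replace (fun t => f t - g t) with (fun t => f t + (-1) * g t).
  rewrite RS_plus, RS_scal; ring. apply functional_extensionality; intros; ring. Qed.
Lemma RS_abs_diff m N f g : (1 <= N)%nat ->
  Rabs (riemann_sum m N f - riemann_sum m N g) <= riemann_sum m N (fun t => Rabs (f t - g t)).
Proof.
  intros HN. rewrite <- RS_minus. apply Rabs_le. split.
  - replace (- riemann_sum m N (fun t => Rabs (f t - g t))) with
      (riemann_sum m N (fun t => (-1) * Rabs (f t - g t))) by (rewrite RS_scal; ring).
    apply RS_le; auto; intros.
    pose proof (Rle_abs (-(f t - g t))) as H1. rewrite Rabs_Ropp in H1. lra.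
  - apply RS_le; auto; intros; apply Rle_abs.
Qed.
Lemma RS_nonneg m N f : (1 <= N)%nat -> (forall t, inner N m t -> 0 <= f t) -> 0 <= riemann_sum m N f.
Proof. intros HN H. replace 0 with (riemann_sum m N (fun _ => 0)). apply RS_le; auto.
  rewrite RS_const; auto; ring. Qed.

Lemma RS_S m N f : riemann_sum (S m) N f =
  2 / INR N * sumN N (fun j => riemann_sum m N (fun t => f (upd t (S m) (gpt N j)))).
Proof. unfold riemann_sum; simpl gsum. rewrite sumN_scal. simpl pow. ring. Qed.
Lemma w_nonneg N m f w : (1 <= N)%nat ->
  (forall t s, inner N m t -> near N m t s -> Rabs (f s - f t) <= w t) ->
  forall t, inner N m t -> 0 <= w t.
Proof. intros HN H t Ht. specialize (H t t Ht (near_refl N m t HN)).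
  unfold Rminus in H; rewrite Rplus_opp_r, Rabs_R0 in H; auto. Qed.

Lemma refine m : forall f w N M, (1 <= N)%nat -> (1 <= M)%nat ->
  (forall t s, inner N m t -> near N m t s -> Rabs (f s - f t) <= w t) ->
  Rabs (riemann_sum m N f - riemann_sum m (N * M) f) <= 3 ^ m * riemann_sum m N w.
Proof.
  induction m; intros f w N M HN HM H.
  - unfold riemann_sum; simpl. unfold Rminus; rewrite Rplus_opp_r, Rabs_R0.
    assert (0 <= w (fun _ => 0)) by (apply (w_nonneg N 0 f w HN H); intros k Hk; lia). lra.
  - assert (Hn : 0 < INR N) by (apply INR_pos; auto).
    assert (Hm : 0 < INR M) by (apply INR_pos; auto).
    rewrite !RS_S, sumN_mul.
    set (X := fun j => riemann_sum m N (fun t => f (upd t (S m) (gpt N j)))).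
    set (Y := fun j i => riemann_sum m (N * M) (fun t => f (upd t (S m) (gpt (N * M) (j * M + i))))).
    set (W := fun j => riemann_sum m N (fun t => w (upd t (S m) (gpt N j)))).
    assert (Wpos : forall j, (j < N)%nat -> 0 <= W j).
    { intros j Hj. unfold W. apply RS_nonneg; auto. intros t Ht.
      apply (w_nonneg N (S m) f w HN H). apply inner_upd; auto. }
    assert (Key : forall j i, (j < N)%nat -> (i < M)%nat -> Rabs (X j - Y j i) <= (1 + 2 * 3 ^ m) * W j).
    { intros j i Hj Hi.
      set (fj := fun t => f (upd t (S m) (gpt N j))).
      set (fji := fun t => f (upd t (S m) (gpt (N * M) (j * M + i)))).
      assert (A1 : Rabs (riemann_sum m N fj - riemann_sum m N fji) <= W j).
      { eapply Rle_trans. apply RS_abs_diff; auto. apply RS_le; auto. intros t Ht.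
        unfold fj, fji. rewrite Rabs_minus_sym. apply H. apply inner_upd; auto.
        apply near_upd. apply near_refl; auto. apply gpt_refine; auto. }
      assert (A2 : Rabs (riemann_sum m N fji - riemann_sum m (N * M) fji) <=
                   3 ^ m * riemann_sum m N (fun t => 2 * w (upd t (S m) (gpt N j)))).
      { apply IHm; auto. intros t s Ht Hs. unfold fji.
        assert (T := inner_upd N m t j Ht Hj).
        pose proof (H _ _ T (near_upd N m t s _ _ Hs (gpt_refine N M j i Hj Hi))) as B1.
        pose proof (H _ _ T (near_upd N m t t _ _ (near_refl N m t HN) (gpt_refine N M j i Hj Hi))) as B2.
        replace (f (upd s (S m) (gpt (N * M) (j * M + i))) - f (upd t (S m) (gpt (N * M) (j * M + i)))) with
          ((f (upd s (S m) (gpt (N * M) (j * M + i))) - f (upd t (S m) (gpt N j))) -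
           (f (upd t (S m) (gpt (N * M) (j * M + i))) - f (upd t (S m) (gpt N j)))) by ring.
        eapply Rle_trans. apply Rabs_triang. rewrite Rabs_Ropp. lra. }
      rewrite RS_scal in A2. fold (W j) in A2.
      unfold X, Y. fold fj fji.
      replace (riemann_sum m N fj - riemann_sum m (N * M) fji) with
        ((riemann_sum m N fj - riemann_sum m N fji) + (riemann_sum m N fji - riemann_sum m (N * M) fji)) by ring.
      eapply Rle_trans. apply Rabs_triang. lra. }
    assert (E : 2 / INR N * sumN N X - 2 / INR (N * M) * sumN N (fun j => sumN M (fun i => Y j i)) =
                2 / INR N * sumN N (fun j => / INR M * sumN M (fun i => Rabs (X j - Y j i) * 0 + (X j - Y j i)))).
    { rewrite (sumN_ext N (fun j => / INR M * sumN M (fun i => Rabs (X j - Y j i) * 0 + (X j - Y j i)))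
                 (fun j => X j - / INR M * sumN M (fun i => Y j i))).
      rewrite sumN_minus, sumN_scal, mult_INR. unfold Rdiv; rewrite Rinv_mult; ring.
      intros j Hj. rewrite (sumN_ext M _ (fun i => X j - Y j i)) by (intros; ring).
      rewrite sumN_minus, sumN_const. change (sumN M (Y j)) with (sumN M (fun i => Y j i)). field; lra. }
    change (fun j => sumN M (fun i => riemann_sum m (N*M) (fun t => f (upd t (S m) (gpt (N*M) (j*M+i)))))) with (fun j => sumN M (fun i => Y j i)).
    rewrite E. rewrite Rabs_mult, (Rabs_right (2 / INR N)).
    2: { unfold Rdiv; assert (0 < / INR N) by (apply Rinv_0_lt_compat; auto); lra. }
    replace (3 ^ S m * (2 / INR N * sumN N W)) with (2 / INR N * (3 ^ S m * sumN N W)) by ring.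
    apply Rmult_le_compat_l. unfold Rdiv; assert (0 < / INR N) by (apply Rinv_0_lt_compat; auto); lra.
    eapply Rle_trans. apply sumN_abs. rewrite <- sumN_scal. apply sumN_le. intros j Hj.
    rewrite Rabs_mult, Rabs_right by (left; apply Rinv_0_lt_compat; auto).
    eapply Rle_trans. apply Rmult_le_compat_l. left; apply Rinv_0_lt_compat; auto. apply sumN_abs.
    eapply Rle_trans. apply Rmult_le_compat_l. left; apply Rinv_0_lt_compat; auto.
    apply (sumN_le M _ (fun _ => (1 + 2 * 3 ^ m) * W j)). intros i Hi.
    rewrite Rmult_0_r, Rplus_0_l. apply Key; auto.
    rewrite sumN_const. specialize (Wpos j Hj).
    assert (1 <= 3 ^ m) by (apply pow_R1_Rle; lra).
    replace (/ INR M * (INR M * ((1 + 2 * 3 ^ m) * W j))) with ((1 + 2 * 3 ^ m) * W j) by (field; lra).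
    simpl. nra.
Qed.
Lemma small_tail C eps : 0 <= C -> 0 < eps -> exists N0, forall N, (N0 <= N)%nat -> C / INR (S N) < eps.
Proof.
  intros HC He. destruct (INR_unbounded (C / eps)) as [N0 HN0]. exists N0. intros N HN.
  assert (HS : INR N0 + 1 <= INR (S N)) by (rewrite <- S_INR; apply le_INR; lia).
  assert (Hp : 0 < INR (S N)) by (apply INR_pos; lia).
  assert (C < eps * INR (S N)).
  { assert (C / eps * eps = C) by (field; lra).
    assert (C / eps < INR (S N)) by lra. nra. }
  apply Rmult_lt_reg_r with (INR (S N)); auto. replace (C / INR (S N) * INR (S N)) with C by (field; lra). lra.
Qed.

Lemma lim_diff_bound u v a b E C : Un_cv u a -> Un_cv v b -> 0 <= C ->
  (exists N0, forall N, (N0 <= N)%nat -> Rabs (u N - v N) <= E + C / INR (S N)) ->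
  Rabs (a - b) <= E.
Proof.
  intros Hu Hv HC [N0 H]. destruct (Rle_or_lt (Rabs (a - b)) E) as [|Hlt]; auto. exfalso.
  set (g := Rabs (a - b) - E). assert (Hg : 0 < g/3) by (unfold g; lra).
  destruct (Hu _ Hg) as [N1 H1]. destruct (Hv _ Hg) as [N2 H2].
  destruct (small_tail C (g/3) HC Hg) as [N3 H3].
  set (N := (N0 + N1 + N2 + N3)%nat).
  specialize (H N ltac:(unfold N; lia)). specialize (H1 N ltac:(unfold N; lia)).
  specialize (H2 N ltac:(unfold N; lia)). specialize (H3 N ltac:(unfold N; lia)).
  unfold Rdist in H1, H2.
  assert (Rabs (a - b) <= Rabs (u N - a) + Rabs (u N - v N) + Rabs (v N - b)).
  { replace (a - b) with (-(u N - a) + (u N - v N) + (v N - b)) by ring.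
    eapply Rle_trans. apply Rabs_triang. rewrite (Rplus_comm _ (Rabs _)).
    pose proof (Rabs_triang (-(u N - a)) (u N - v N)). rewrite Rabs_Ropp in H0. lra. }
  unfold g in *. lra.
Qed.

Lemma lim_ge u a L : Un_cv u a -> (exists N0, forall N, (N0 <= N)%nat -> L <= u N) -> L <= a.
Proof.
  intros Hu [N0 H]. destruct (Rle_or_lt L a) as [|Hlt]; auto. exfalso.
  assert (Hg : 0 < L - a) by lra. destruct (Hu _ Hg) as [N1 H1].
  specialize (H (N0 + N1)%nat ltac:(lia)). specialize (H1 (N0 + N1)%nat ltac:(lia)).
  unfold Rdist in H1. apply Rabs_def2 in H1. lra.
Qed.

Lemma box_integral_unique m f l : Un_cv (fun N => riemann_sum m (S N) f) l -> box_integral m f = l.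
Proof.
  intros H. unfold box_integral.
  apply UL_sequence with (fun N => riemann_sum m (S N) f); auto.
  apply epsilon_spec. exists l; auto.
Qed.

Lemma box_integral_spec m f :
  (forall eta, 0 < eta -> exists N0, forall N M, (N0 <= N)%nat -> (N0 <= M)%nat ->
     Rabs (riemann_sum m (S N) f - riemann_sum m (S M) f) <= eta) ->
  Un_cv (fun N => riemann_sum m (S N) f) (box_integral m f).
Proof.
  intros H. assert (Hc : Cauchy_crit (fun N => riemann_sum m (S N) f)).
  { intros eps He. destruct (H (eps/2) ltac:(lra)) as [N0 HN0]. exists N0. intros n k Hn Hk.
    unfold Rdist. specialize (HN0 n k Hn Hk). lra. }
  destruct (R_complete _ Hc) as [l Hl].
  rewrite (box_integral_unique m f l Hl); auto.
Qed.

Lemma Un_cv_scal u l c : Un_cv u l -> Un_cv (fun N => c * u N) (c * l).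
Proof.
  intros H eps He. destruct (Req_dec c 0) as [Hc|Hc].
  - exists O; intros; unfold Rdist; subst; rewrite !Rmult_0_l; unfold Rminus; rewrite Rplus_opp_r, Rabs_R0; auto.
  - assert (Hca : 0 < Rabs c) by (apply Rabs_pos_lt; auto).
    destruct (H (eps / Rabs c)) as [N HN]. apply Rdiv_lt_0_compat; auto.
    exists N; intros n Hn. specialize (HN n Hn). unfold Rdist in *.
    replace (c * u n - c * l) with (c * (u n - l)) by ring. rewrite Rabs_mult.
    apply Rmult_lt_reg_r with (/ Rabs c). apply Rinv_0_lt_compat; auto.
    replace (Rabs c * Rabs (u n - l) * / Rabs c) with (Rabs (u n - l)) by (field; lra). auto.
Qed.
Lemma cnt_upper_inv N a w : (1 <= N)%nat -> 0 <= w -> forall K,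
  2 / INR N * sumN K (fun j => ind (rle a (gpt N j) && rle (gpt N j) (a + w))) <=
  Rmax 0 (Rmin (gpt N K) (a + w + 2 / INR N) - a).
Proof.
  intros HN Hw. assert (Hh : 0 < 2 / INR N) by (apply Rdiv_lt_0_compat; [lra| apply INR_pos; auto]).
  induction K.
  - simpl. rewrite Rmult_0_r. apply Rmax_l.
  - simpl sumN. rewrite Rmult_plus_distr_l. rewrite gpt_S by auto.
    set (x := gpt N K) in *. set (h := 2 / INR N) in *.
    destruct (rle a x) eqn:E1; destruct (rle x (a + w)) eqn:E2; simpl ind;
      try apply rle_true in E1; try apply rle_true in E2;
      try apply rle_false in E1; try apply rle_false in E2;
      revert IHK; unfold Rmax, Rmin; repeat destruct Rle_dec; intros; lra.
Qed.

Lemma cnt_upper N a w : (1 <= N)%nat -> 0 <= w ->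
  2 / INR N * sumN N (fun j => ind (rle a (gpt N j) && rle (gpt N j) (a + w))) <= w + 2 / INR N.
Proof.
  intros HN Hw. eapply Rle_trans. apply cnt_upper_inv; auto.
  assert (Hh : 0 < 2 / INR N) by (apply Rdiv_lt_0_compat; [lra| apply INR_pos; auto]).
  unfold Rmax, Rmin; repeat destruct Rle_dec; lra.
Qed.

Lemma sumN_ind_nonneg K g : 0 <= sumN K (fun j => ind (g j)).
Proof. induction K; simpl; [lra|]. pose proof (ind_bounds (g K)); lra. Qed.

Lemma cnt_lower_inv N a b : (1 <= N)%nat -> -1 <= a -> forall K,
  Rmin (gpt N K) b - a - 2 * (2 / INR N) <=
  2 / INR N * sumN K (fun j => ind (rle a (gpt N j) && rle (gpt N j) b)).
Proof.
  intros HN Ha. assert (Hh : 0 < 2 / INR N) by (apply Rdiv_lt_0_compat; [lra| apply INR_pos; auto]).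
  assert (Hg0 : gpt N 0 = -1 + (2 / INR N) / 2) by (rewrite gpt_0 by auto; field; apply not_0_INR; lia).
  induction K.
  - simpl. rewrite Rmult_0_r. rewrite Hg0. unfold Rmin; destruct Rle_dec; lra.
  - simpl sumN. rewrite Rmult_plus_distr_l. rewrite gpt_S by auto.
    assert (Hs := sumN_ind_nonneg K (fun j => rle a (gpt N j) && rle (gpt N j) b)).
    assert (Hs' : 0 <= 2 / INR N * sumN K (fun j => ind (rle a (gpt N j) && rle (gpt N j) b))) by
      (apply Rmult_le_pos; lra).
    set (x := gpt N K) in *. set (h := 2 / INR N) in *.
    destruct (rle a x) eqn:E1; destruct (rle x b) eqn:E2; simpl ind;
      try apply rle_true in E1; try apply rle_true in E2;
      try apply rle_false in E1; try apply rle_false in E2;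
      revert IHK; unfold Rmin; repeat destruct Rle_dec; intros; lra.
Qed.

Lemma cnt_lower N a b : (1 <= N)%nat -> -1 <= a -> b <= 1 ->
  b - a - 2 * (2 / INR N) <=
  2 / INR N * sumN N (fun j => ind (rle a (gpt N j) && rle (gpt N j) b)).
Proof.
  intros HN Ha Hb. eapply Rle_trans. 2: apply cnt_lower_inv; auto.
  rewrite gpt_N by auto. assert (0 < / INR N) by (apply Rinv_0_lt_compat, INR_pos; auto).
  unfold Rmin; destruct Rle_dec; lra.
Qed.

Lemma affine_interval c r u w : c <> 0 -> 0 <= w -> exists a, forall s,
  u <= c * s + r <= u + w -> rle a s && rle s (a + w / Rabs c) = true.
Proof.
  intros Hc Hw. destruct (Rlt_or_le 0 c) as [Hp|Hn].
  - exists ((u - r) / c). intros s [H1 H2]. rewrite Rabs_right by lra.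
    apply andb_true_intro; split; apply rle_true.
    + replace s with ((c * s) / c) by (field; lra). apply div_le_mono; lra.
    + replace s with ((c * s) / c) by (field; lra).
      replace ((u - r) / c + w / c) with ((u - r + w) / c) by (field; lra). apply div_le_mono; lra.
  - assert (c < 0) by lra. exists ((u + w - r) / c). intros s [H1 H2]. rewrite Rabs_left by lra.
    apply andb_true_intro; split; apply rle_true.
    + replace ((u + w - r) / c) with ((r - u - w) / (- c)) by (field; lra).
      replace s with ((- c * s) / (- c)) by (field; lra). apply div_le_mono; lra.
    + replace ((u + w - r) / c + w / - c) with ((r - u) / (- c)) by (field; lra).
      replace s with ((- c * s) / (- c)) by (field; lra). apply div_le_mono; lra.
Qed.

Lemma slab1D N c r d : (1 <= N)%nat -> c <> 0 -> 0 <= d ->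
  2 / INR N * sumN N (fun j => ind (rle (Rabs (Rabs (c * gpt N j + r) - 1)) d)) <=
  2 * (2 * d / Rabs c + 2 / INR N).
Proof.
  intros HN Hc Hd.
  destruct (affine_interval c r (1 - d) (2 * d) Hc ltac:(lra)) as [a1 Ha1].
  destruct (affine_interval c r (-1 - d) (2 * d) Hc ltac:(lra)) as [a2 Ha2].
  assert (Hca : 0 < Rabs c) by (apply Rabs_pos_lt; auto).
  assert (Hw : 0 <= 2 * d / Rabs c) by (apply Rmult_le_pos; [lra| left; apply Rinv_0_lt_compat; auto]).
  pose proof (cnt_upper N a1 _ HN Hw) as C1. pose proof (cnt_upper N a2 _ HN Hw) as C2.
  assert (Hh : 0 < 2 / INR N) by (apply Rdiv_lt_0_compat; [lra| apply INR_pos; auto]).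
  replace (2 * (2 * d / Rabs c + 2 / INR N)) with ((2 * d / Rabs c + 2 / INR N) + (2 * d / Rabs c + 2 / INR N)) by ring.
  eapply Rle_trans. 2: { apply Rplus_le_compat; [apply C1|apply C2]. }
  rewrite <- Rmult_plus_distr_l, <- sumN_plus. apply Rmult_le_compat_l; [lra|].
  apply sumN_le. intros j Hj. set (s := gpt N j).
  destruct (rle (Rabs (Rabs (c * s + r) - 1)) d) eqn:E; simpl ind.
  2: { pose proof (ind_bounds (rle a1 s && rle s (a1 + 2 * d / Rabs c))).
       pose proof (ind_bounds (rle a2 s && rle s (a2 + 2 * d / Rabs c))). lra. }
  apply rle_true in E. apply Rabs_le_inv in E.
  replace (2 * d / Rabs c) with ((2 * d) / Rabs c) by auto.
  destruct (Rle_or_lt 0 (c * s + r)) as [Hp|Hn].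
  - rewrite Rabs_right in E by lra. rewrite (Ha1 s) by lra. simpl.
    pose proof (ind_bounds (rle a2 s && rle s (a2 + 2 * d / Rabs c))). lra.
  - rewrite Rabs_left in E by lra. rewrite (Ha2 s) by lra. simpl.
    pose proof (ind_bounds (rle a1 s && rle s (a1 + 2 * d / Rabs c))). lra.
Qed.
Definition lin (m : nat) (c : nat -> R) (t : nat -> R) : R := sumR1 m (fun k => c k * t k).
Definition sumabs (m : nat) (c : nat -> R) : R := sumR1 m (fun k => Rabs (c k)).
Definition slab (m : nat) (c : nat -> R) (d : R) (t : nat -> R) : R :=
  ind (rle (Rabs (Rabs (lin m c t) - 1)) d).

Lemma sumabs_nonneg m c : 0 <= sumabs m c.
Proof. apply sumR1_nonneg; intros; apply Rabs_pos. Qed.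

Lemma lin_bound m c t r : (forall k, (1 <= k <= m)%nat -> Rabs (t k) <= r) ->
  Rabs (lin m c t) <= sumabs m c * r.
Proof.
  intros H. unfold lin, sumabs. eapply Rle_trans. apply sumR1_abs.
  rewrite Rmult_comm, <- sumR1_scal. apply sumR1_le. intros k Hk. rewrite Rabs_mult.
  rewrite Rmult_comm. apply Rmult_le_compat_r. apply Rabs_pos. auto.
Qed.

Lemma lin_minus m c s t : lin m c s - lin m c t = lin m c (fun k => s k - t k).
Proof. unfold lin. rewrite <- sumR1_minus. apply sumR1_ext; intros; ring. Qed.

Lemma lin_diff m c s t d : (forall k, (1 <= k <= m)%nat -> Rabs (s k - t k) <= d) ->
  Rabs (lin m c s - lin m c t) <= sumabs m c * d.
Proof. intros H. rewrite lin_minus. apply lin_bound; auto. Qed.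

Lemma lin_coef m c c' t : (forall k, (1 <= k <= m)%nat -> Rabs (t k) <= 1) ->
  Rabs (lin m c t - lin m c' t) <= sumR1 m (fun k => Rabs (c k - c' k)).
Proof.
  intros H. unfold lin. rewrite <- sumR1_minus. eapply Rle_trans. apply sumR1_abs.
  apply sumR1_le. intros k Hk. replace (c k * t k - c' k * t k) with ((c k - c' k) * t k) by ring.
  rewrite Rabs_mult. specialize (H k Hk). pose proof (Rabs_pos (c k - c' k)).
  pose proof (Rabs_pos (t k)). nra.
Qed.

Lemma sumR1_S m f : sumR1 (S m) f = sumR1 m f + f (S m).
Proof. reflexivity. Qed.

Lemma lin_upd1 m c t s : (1 <= m)%nat -> lin m c (upd t 1 s) = c 1%nat * s + lin m c (upd t 1 0).
Proof.
  intros Hm. induction m. lia. destruct m.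
  - unfold lin; simpl. rewrite !upd_eq. ring.
  - unfold lin in *. rewrite !(sumR1_S (S m)). rewrite IHm by lia. rewrite !upd_neq by lia. ring.
Qed.

Lemma lin_split m c t : (1 <= m)%nat -> lin m c t = c 1%nat * t 1%nat + lin m c (upd t 1 0).
Proof. intros Hm. rewrite <- (lin_upd1 m c t (t 1%nat) Hm). rewrite upd_same. auto. Qed.

Lemma slice m : forall f N B, (1 <= N)%nat ->
  (forall t, 2 / INR N * sumN N (fun j => f (upd t 1 (gpt N j))) <= B) ->
  riemann_sum (S m) N f <= 2 ^ m * B.
Proof.
  induction m; intros f N B HN H.
  - unfold riemann_sum; simpl. rewrite Rmult_1_r, Rmult_1_l. apply H.
  - rewrite RS_S.
    assert (Hn : 0 < INR N) by (apply INR_pos; auto).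
    apply Rle_trans with (2 / INR N * sumN N (fun _ => 2 ^ m * B)).
    + apply Rmult_le_compat_l. unfold Rdiv; assert (0 < / INR N) by (apply Rinv_0_lt_compat; auto); lra.
      apply sumN_le. intros j Hj. apply IHm; auto. intros t.
      rewrite (sumN_ext N _ (fun i => f (upd (upd t (S (S m)) (gpt N j)) 1 (gpt N i)))). apply H.
      intros i Hi. rewrite upd_comm by lia. auto.
    + rewrite sumN_const. simpl. right; field; lra.
Qed.

Lemma slab_binding m c d N : c 1%nat <> 0 -> 0 <= d -> (1 <= N)%nat ->
  riemann_sum (S m) N (slab (S m) c d) <= 2 ^ m * (2 * (2 * d / Rabs (c 1%nat) + 2 / INR N)).
Proof.
  intros Hc Hd HN. apply slice; auto. intros t.
  rewrite (sumN_ext N _ (fun j => ind (rle (Rabs (Rabs (c 1%nat * gpt N j + lin (S m) c (upd t 1 0)) - 1)) d))).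
  apply slab1D; auto.
  intros j Hj. unfold slab. rewrite lin_upd1 by lia. auto.
Qed.

Lemma slab_free m c d N : sumabs m c < 1 -> 0 <= d < 1 - sumabs m c -> (1 <= N)%nat ->
  riemann_sum m N (slab m c d) <= 0.
Proof.
  intros Hs Hd HN. replace 0 with (riemann_sum m N (fun _ => 0)) by (rewrite RS_const; auto; ring).
  apply RS_le; auto. intros t Ht. unfold slab.
  assert (Rabs (lin m c t) <= sumabs m c * 1) by (apply lin_bound; apply inner_box with N; auto).
  destruct (rle _ d) eqn:E; simpl; [|lra]. apply rle_true in E. apply Rabs_le_inv in E.
  pose proof (Rabs_pos (lin m c t)). lra.
Qed.

Definition good (m : nat) (c : nat -> R) := c 1%nat <> 0 \/ sumabs m c < 1.

Lemma slab_bound m c : (1 <= m)%nat -> good m c -> exists C dc, 0 <= C /\ 0 < dc /\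
  forall d N, 0 <= d <= dc -> (1 <= N)%nat -> riemann_sum m N (slab m c d) <= C * (d + / INR N).
Proof.
  intros Hm [Hc|Hs].
  - destruct m as [|m]; [lia|].
    assert (Hca : 0 < Rabs (c 1%nat)) by (apply Rabs_pos_lt; auto).
    assert (H2 : 0 < 2 ^ m) by (apply pow_lt; lra).
    exists (2 ^ m * 4 * (/ Rabs (c 1%nat) + 1)), 1. split.
    { assert (0 < / Rabs (c 1%nat)) by (apply Rinv_0_lt_compat; auto). nra. }
    split; [lra|]. intros d N Hd HN. eapply Rle_trans. apply slab_binding; auto; lra.
    assert (Hn : 0 < / INR N) by (apply Rinv_0_lt_compat, INR_pos; auto).
    assert (0 < / Rabs (c 1%nat)) by (apply Rinv_0_lt_compat; auto).
    unfold Rdiv. rewrite !Rmult_assoc. apply Rmult_le_compat_l; [lra|].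
    assert (0 <= d * / Rabs (c 1%nat)) by (apply Rmult_le_pos; lra). nra.
  - exists 0, ((1 - sumabs m c) / 2). split; [lra|]. split; [lra|].
    intros d N Hd HN. rewrite Rmult_0_l. apply slab_free; auto. lra.
Qed.

Fixpoint prodR1 (m : nat) (g : nat -> R) : R :=
  match m with O => 1 | S m' => prodR1 m' g * g (S m') end.

Lemma prodR1_ext m g g' : (forall k, (1 <= k <= m)%nat -> g k = g' k) -> prodR1 m g = prodR1 m g'.
Proof. induction m; simpl; intros H; auto. rewrite IHm by (intros; apply H; lia). rewrite H by lia; auto. Qed.

Lemma gsum_prod m : forall N (phi : nat -> R -> R),
  gsum m N (fun t => prodR1 m (fun k => phi k (t k))) = prodR1 m (fun k => sumN N (fun j => phi k (gpt N j))).
Proof.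
  induction m; intros N phi; simpl; auto.
  rewrite (sumN_ext N _ (fun j => gsum m N (fun t => prodR1 m (fun k => phi k (t k))) * phi (S m) (gpt N j))).
  - rewrite sumN_scal, IHm. auto.
  - intros j Hj. rewrite Rmult_comm, <- gsum_scal. f_equal.
    apply functional_extensionality; intros t. rewrite upd_eq. rewrite Rmult_comm. f_equal.
    apply prodR1_ext. intros k Hk. rewrite upd_neq by lia. auto.
Qed.

Lemma prodR1_scal m c g : c ^ m * prodR1 m g = prodR1 m (fun k => c * g k).
Proof. induction m; simpl; [ring|]. rewrite <- IHm; ring. Qed.

Lemma prodR1_le m g g' : (forall k, (1 <= k <= m)%nat -> 0 <= g k <= g' k) -> prodR1 m g <= prodR1 m g'.
Proof.
  induction m; simpl; intros H; [lra|].
  assert (0 <= prodR1 m g).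
  { clear IHm. induction m; simpl; [lra|]. apply Rmult_le_pos. apply IHm; intros; apply H; lia.
    apply H; lia. }
  apply Rmult_le_compat; auto. apply H; lia. apply IHm; intros; apply H; lia. apply H; lia.
Qed.

Lemma prodR1_pos m g : (forall k, (1 <= k <= m)%nat -> 0 < g k) -> 0 < prodR1 m g.
Proof. induction m; simpl; intros H; [lra|]. apply Rmult_lt_0_compat. apply IHm; intros; apply H; lia. apply H; lia. Qed.

Lemma prodR1_ind m (P : nat -> bool) :
  (prodR1 m (fun k => ind (P k)) = 1 /\ forall k, (1 <= k <= m)%nat -> P k = true) \/
  prodR1 m (fun k => ind (P k)) = 0.
Proof.
  induction m; simpl. left; split; auto; intros; lia.
  destruct (P (S m)) eqn:E; simpl.
  - destruct IHm as [[H1 H2]|H]. left; split. rewrite H1; ring. intros k Hk.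
    destruct (Nat.eq_dec k (S m)). subst; auto. apply H2; lia.
    right; rewrite H; ring.
  - right; ring.
Qed.
Definition FF (m : nat) (c1 c2 p1 p2 : nat -> R) (t : nat -> R) : R :=
  if andb (box_ok m t) (andb (rle (Rabs (lin m c1 t)) 1) (rle (Rabs (lin m c2 t)) 1))
  then lin m p1 t ^ 2 + lin m p2 t ^ 2 else 0.

Lemma box_ok_true m t : (forall k, (1 <= k <= m)%nat -> Rabs (t k) <= 1) -> box_ok m t = true.
Proof.
  induction m; simpl; intros H; auto. rewrite IHm by (intros; apply H; lia).
  simpl. apply rle_true. apply H; lia.
Qed.

Lemma sq_lip x y d K : Rabs (x - y) <= d -> Rabs x <= K -> Rabs y <= K -> Rabs (x ^ 2 - y ^ 2) <= 2 * K * d.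
Proof.
  intros H1 H2 H3. replace (x ^ 2 - y ^ 2) with ((x - y) * (x + y)) by ring. rewrite Rabs_mult.
  assert (Rabs (x + y) <= 2 * K) by (eapply Rle_trans; [apply Rabs_triang| lra]).
  pose proof (Rabs_pos (x - y)). pose proof (Rabs_pos (x + y)).
  replace (2 * K * d) with (d * (2 * K)) by ring. apply Rmult_le_compat; auto.
Qed.

Lemma sq_bound x K : Rabs x <= K -> 0 <= x ^ 2 <= K ^ 2.
Proof. intros H. apply Rabs_le_inv in H. split. nra. nra. Qed.

Lemma switch a b d : Rabs (a - b) <= d -> rle (Rabs a) 1 <> rle (Rabs b) 1 ->
  rle (Rabs (Rabs b - 1)) d = true.
Proof.
  intros H Hne. apply rle_true.
  pose proof (Rabs_triang_inv a b). pose proof (Rabs_triang_inv b a).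
  rewrite Rabs_minus_sym in H1.
  destruct (rle (Rabs a) 1) eqn:E1, (rle (Rabs b) 1) eqn:E2; try congruence;
  try apply rle_true in E1; try apply rle_true in E2; try apply rle_false in E1; try apply rle_false in E2;
  apply Rabs_le; lra.
Qed.

Lemma comb (bs1 bs2 bt1 bt2 : bool) P Q Bd E i1 i2 :
  0 <= P <= Bd -> 0 <= Q <= Bd -> Rabs (P - Q) <= E -> 0 <= i1 -> 0 <= i2 ->
  (bs1 = bt1 \/ i1 = 1) -> (bs2 = bt2 \/ i2 = 1) ->
  Rabs ((if bs1 && bs2 then P else 0) - (if bt1 && bt2 then Q else 0)) <= E + Bd * (i1 + i2).
Proof.
  intros HP HQ HE Hi1 Hi2 H1 H2. apply Rabs_le_inv in HE.
  assert (0 <= E) by lra.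
  destruct bs1, bs2, bt1, bt2; simpl;
  destruct H1 as [H1|H1]; try discriminate; destruct H2 as [H2|H2]; try discriminate;
  try subst i1; try subst i2; apply Rabs_le; nra.
Qed.

Lemma switch_or a b d : Rabs (a - b) <= d ->
  rle (Rabs a) 1 = rle (Rabs b) 1 \/ ind (rle (Rabs (Rabs b - 1)) d) = 1.
Proof.
  intros H. destruct (Bool.bool_dec (rle (Rabs a) 1) (rle (Rabs b) 1)) as [e|ne]; [left; auto|right].
  rewrite (switch a b d H ne); auto.
Qed.

Definition wosc (m : nat) (c1 c2 p1 p2 : nat -> R) (N : nat) (t : nat -> R) : R :=
  let Bd := sumabs m p1 ^ 2 + sumabs m p2 ^ 2 in
  2 * Bd / INR N + Bd * (slab m c1 (sumabs m c1 / INR N) t + slab m c2 (sumabs m c2 / INR N) t).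

Lemma osc_FF m c1 c2 p1 p2 N t s : (1 <= N)%nat -> inner N m t -> near N m t s ->
  Rabs (FF m c1 c2 p1 p2 s - FF m c1 c2 p1 p2 t) <= wosc m c1 c2 p1 p2 N t.
Proof.
  intros HN Ht [Hs1 Hs2].
  assert (Hn : 0 < / INR N) by (apply Rinv_0_lt_compat, INR_pos; auto).
  assert (Bt : forall k, (1 <= k <= m)%nat -> Rabs (t k) <= 1) by (apply inner_box with N; auto).
  assert (Bs : forall k, (1 <= k <= m)%nat -> Rabs (s k) <= 1).
  { intros k Hk. specialize (Ht k Hk). specialize (Hs1 k Hk).
    pose proof (Rabs_triang (s k - t k) (t k)). replace (s k - t k + t k) with (s k) in H by ring. lra. }
  unfold FF, wosc. rewrite (box_ok_true m t Bt), (box_ok_true m s Bs). simpl andb.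
  set (P1 := sumabs m p1). set (P2 := sumabs m p2).
  assert (HP1 := sumabs_nonneg m p1). assert (HP2 := sumabs_nonneg m p2). fold P1 P2 in HP1, HP2.
  assert (a1 : Rabs (lin m p1 s) <= P1) by (rewrite <- (Rmult_1_r P1); apply lin_bound; auto).
  assert (a2 : Rabs (lin m p1 t) <= P1) by (rewrite <- (Rmult_1_r P1); apply lin_bound; auto).
  assert (a3 : Rabs (lin m p2 s) <= P2) by (rewrite <- (Rmult_1_r P2); apply lin_bound; auto).
  assert (a4 : Rabs (lin m p2 t) <= P2) by (rewrite <- (Rmult_1_r P2); apply lin_bound; auto).
  assert (d1 : Rabs (lin m p1 s - lin m p1 t) <= P1 * / INR N) by (apply lin_diff; auto).
  assert (d2 : Rabs (lin m p2 s - lin m p2 t) <= P2 * / INR N) by (apply lin_diff; auto).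
  pose proof (sq_lip _ _ _ _ d1 a1 a2) as q1. pose proof (sq_lip _ _ _ _ d2 a3 a4) as q2.
  pose proof (sq_bound _ _ a1). pose proof (sq_bound _ _ a2).
  pose proof (sq_bound _ _ a3). pose proof (sq_bound _ _ a4).
  unfold slab. unfold Rdiv.
  apply comb.
  - lra.
  - lra.
  - replace (lin m p1 s ^ 2 + lin m p2 s ^ 2 - (lin m p1 t ^ 2 + lin m p2 t ^ 2)) with
      ((lin m p1 s ^ 2 - lin m p1 t ^ 2) + (lin m p2 s ^ 2 - lin m p2 t ^ 2)) by ring.
    eapply Rle_trans. apply Rabs_triang. lra.
  - apply ind_bounds.
  - apply ind_bounds.
  - apply switch_or. apply lin_diff; auto.
  - apply switch_or. apply lin_diff; auto.
Qed.

Lemma RS_wosc m c1 c2 p1 p2 N : riemann_sum m N (wosc m c1 c2 p1 p2 N) =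
  riemann_sum m N (fun _ => 2 * (sumabs m p1 ^ 2 + sumabs m p2 ^ 2) / INR N) +
  (sumabs m p1 ^ 2 + sumabs m p2 ^ 2) *
  (riemann_sum m N (slab m c1 (sumabs m c1 / INR N)) + riemann_sum m N (slab m c2 (sumabs m c2 / INR N))).
Proof.
  unfold wosc. rewrite <- RS_plus, <- RS_scal, <- RS_plus. reflexivity.
Qed.

Theorem FF_integral m c1 c2 p1 p2 : (1 <= m)%nat -> good m c1 -> good m c2 ->
  Un_cv (fun N => riemann_sum m (S N) (FF m c1 c2 p1 p2)) (box_integral m (FF m c1 c2 p1 p2)).
Proof.
  intros Hm G1 G2. apply box_integral_spec.
  destruct (slab_bound m c1 Hm G1) as [C1 [e1 [HC1 [He1 S1]]]].
  destruct (slab_bound m c2 Hm G2) as [C2 [e2 [HC2 [He2 S2]]]].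
  set (K1 := sumabs m c1). set (K2 := sumabs m c2).
  set (Bd := sumabs m p1 ^ 2 + sumabs m p2 ^ 2).
  assert (HK1 : 0 <= K1) by apply sumabs_nonneg. assert (HK2 : 0 <= K2) by apply sumabs_nonneg.
  assert (HB : 0 <= Bd) by (unfold Bd; nra).
  set (Q := 2 ^ m * (2 * Bd) + Bd * (C1 * (K1 + 1) + C2 * (K2 + 1))).
  assert (HQ : 0 <= Q).
  { unfold Q. assert (0 < 2 ^ m) by (apply pow_lt; lra). apply Rplus_le_le_0_compat. nra.
    apply Rmult_le_pos; auto. nra. }
  assert (Wb : forall N, (1 <= N)%nat -> K1 / INR N <= e1 -> K2 / INR N <= e2 ->
                riemann_sum m N (wosc m c1 c2 p1 p2 N) <= Q / INR N).
  { intros N HN h1 h2. assert (Hn : 0 < INR N) by (apply INR_pos; auto).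
    assert (Hn' : 0 < / INR N) by (apply Rinv_0_lt_compat; auto).
    rewrite RS_wosc, RS_const by auto. fold K1 K2 Bd.
    assert (0 <= K1 / INR N) by (unfold Rdiv; apply Rmult_le_pos; lra).
    assert (0 <= K2 / INR N) by (unfold Rdiv; apply Rmult_le_pos; lra).
    specialize (S1 (K1 / INR N) N ltac:(lra) HN). specialize (S2 (K2 / INR N) N ltac:(lra) HN).
    apply Rle_trans with (2 ^ m * (2 * Bd / INR N) + Bd * (C1 * (K1 / INR N + / INR N) + C2 * (K2 / INR N + / INR N))).
    { apply Rplus_le_compat_l. apply Rmult_le_compat_l; auto. lra. }
    right. unfold Q. field. lra. }
  intros eta Heta.
  assert (H3 : 0 < 3 ^ m) by (apply pow_lt; lra).
  destruct (small_tail K1 e1 HK1 He1) as [N1 T1].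
  destruct (small_tail K2 e2 HK2 He2) as [N2 T2].
  destruct (small_tail (3 ^ m * Q) (eta / 2) ltac:(nra) ltac:(lra)) as [N3 T3].
  exists (N1 + N2 + N3)%nat. intros N M HN HM.
  assert (R1 := refine m (FF m c1 c2 p1 p2) (wosc m c1 c2 p1 p2 (S N)) (S N) (S M) ltac:(lia) ltac:(lia)
                 (fun t s Ht Hs => osc_FF m c1 c2 p1 p2 (S N) t s ltac:(lia) Ht Hs)).
  assert (R2 := refine m (FF m c1 c2 p1 p2) (wosc m c1 c2 p1 p2 (S M)) (S M) (S N) ltac:(lia) ltac:(lia)
                 (fun t s Ht Hs => osc_FF m c1 c2 p1 p2 (S M) t s ltac:(lia) Ht Hs)).
  rewrite Nat.mul_comm in R2.
  assert (W1 := Wb (S N) ltac:(lia) ltac:(left; apply T1; lia) ltac:(left; apply T2; lia)).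
  assert (W2 := Wb (S M) ltac:(lia) ltac:(left; apply T1; lia) ltac:(left; apply T2; lia)).
  specialize (T3 N ltac:(lia)) as T3N. specialize (T3 M ltac:(lia)) as T3M.
  assert (E1 : 3 ^ m * (Q / INR (S N)) = 3 ^ m * Q / INR (S N)) by (unfold Rdiv; ring).
  assert (E2 : 3 ^ m * (Q / INR (S M)) = 3 ^ m * Q / INR (S M)) by (unfold Rdiv; ring).
  assert (3 ^ m * riemann_sum m (S N) (wosc m c1 c2 p1 p2 (S N)) <= 3 ^ m * (Q / INR (S N))) by
    (apply Rmult_le_compat_l; lra).
  assert (3 ^ m * riemann_sum m (S M) (wosc m c1 c2 p1 p2 (S M)) <= 3 ^ m * (Q / INR (S M))) by
    (apply Rmult_le_compat_l; lra).
  set (u := riemann_sum m (S N * S M) (FF m c1 c2 p1 p2)) in *.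
  replace (riemann_sum m (S N) (FF m c1 c2 p1 p2) - riemann_sum m (S M) (FF m c1 c2 p1 p2)) with
    ((riemann_sum m (S N) (FF m c1 c2 p1 p2) - u) - (riemann_sum m (S M) (FF m c1 c2 p1 p2) - u)) by ring.
  eapply Rle_trans. apply Rabs_triang. rewrite Rabs_Ropp. lra.
Qed.

Definition cdist (m : nat) (c c' : nat -> R) : R := sumR1 m (fun k => Rabs (c k - c' k)).

Lemma cdist_nonneg m c c' : 0 <= cdist m c c'.
Proof. apply sumR1_nonneg; intros; apply Rabs_pos. Qed.

Lemma compare_pt m c1 c2 p1 p2 c1' c2' p1' p2' t :
  (forall k, (1 <= k <= m)%nat -> Rabs (t k) <= 1) ->
  let dp1 := cdist m p1 p1' in let dp2 := cdist m p2 p2' in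
  let K1 := sumabs m p1' + dp1 in let K2 := sumabs m p2' + dp2 in
  Rabs (FF m c1 c2 p1 p2 t - FF m c1' c2' p1' p2' t) <=
  (2 * K1 * dp1 + 2 * K2 * dp2) + (K1 ^ 2 + K2 ^ 2) *
     (slab m c1' (cdist m c1 c1') t + slab m c2' (cdist m c2 c2') t).
Proof.
  intros Bt dp1 dp2 K1 K2. unfold FF. rewrite (box_ok_true m t Bt). simpl andb.
  assert (e1 : Rabs (lin m p1 t - lin m p1' t) <= dp1) by (apply lin_coef; auto).
  assert (e2 : Rabs (lin m p2 t - lin m p2' t) <= dp2) by (apply lin_coef; auto).
  assert (b1 : Rabs (lin m p1' t) <= sumabs m p1') by (rewrite <- (Rmult_1_r (sumabs m p1')); apply lin_bound; auto).
  assert (b2 : Rabs (lin m p2' t) <= sumabs m p2') by (rewrite <- (Rmult_1_r (sumabs m p2')); apply lin_bound; auto).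
  assert (a1 : Rabs (lin m p1 t) <= K1).
  { pose proof (Rabs_triang (lin m p1 t - lin m p1' t) (lin m p1' t)).
    replace (lin m p1 t - lin m p1' t + lin m p1' t) with (lin m p1 t) in H by ring. unfold K1; lra. }
  assert (a2 : Rabs (lin m p2 t) <= K2).
  { pose proof (Rabs_triang (lin m p2 t - lin m p2' t) (lin m p2' t)).
    replace (lin m p2 t - lin m p2' t + lin m p2' t) with (lin m p2 t) in H by ring. unfold K2; lra. }
  assert (a1' : Rabs (lin m p1' t) <= K1) by (unfold K1; pose proof (cdist_nonneg m p1 p1'); fold dp1 in H; lra).
  assert (a2' : Rabs (lin m p2' t) <= K2) by (unfold K2; pose proof (cdist_nonneg m p2 p2'); fold dp2 in H; lra).
  pose proof (sq_lip _ _ _ _ e1 a1 a1') as q1. pose proof (sq_lip _ _ _ _ e2 a2 a2') as q2.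
  pose proof (sq_bound _ _ a1). pose proof (sq_bound _ _ a2).
  pose proof (sq_bound _ _ a1'). pose proof (sq_bound _ _ a2').
  unfold slab. apply comb.
  - lra.
  - lra.
  - replace (lin m p1 t ^ 2 + lin m p2 t ^ 2 - (lin m p1' t ^ 2 + lin m p2' t ^ 2)) with
      ((lin m p1 t ^ 2 - lin m p1' t ^ 2) + (lin m p2 t ^ 2 - lin m p2' t ^ 2)) by ring.
    eapply Rle_trans. apply Rabs_triang. lra.
  - apply ind_bounds.
  - apply ind_bounds.
  - apply switch_or. apply lin_coef; auto.
  - apply switch_or. apply lin_coef; auto.
Qed.
Lemma FF_compare m c1 c2 p1 p2 c1' c2' p1' p2' C1 e1 C2 e2 :
  (1 <= m)%nat -> good m c1 -> good m c2 -> good m c1' -> good m c2' -> 0 <= C1 -> 0 <= C2 ->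
  (forall d N, 0 <= d <= e1 -> (1 <= N)%nat -> riemann_sum m N (slab m c1' d) <= C1 * (d + / INR N)) ->
  (forall d N, 0 <= d <= e2 -> (1 <= N)%nat -> riemann_sum m N (slab m c2' d) <= C2 * (d + / INR N)) ->
  cdist m c1 c1' <= e1 -> cdist m c2 c2' <= e2 ->
  let dp1 := cdist m p1 p1' in let dp2 := cdist m p2 p2' in
  let K1 := sumabs m p1' + dp1 in let K2 := sumabs m p2' + dp2 in
  Rabs (box_integral m (FF m c1 c2 p1 p2) - box_integral m (FF m c1' c2' p1' p2')) <=
  2 ^ m * (2 * K1 * dp1 + 2 * K2 * dp2) + (K1 ^ 2 + K2 ^ 2) * (C1 * cdist m c1 c1' + C2 * cdist m c2 c2').
Proof.
  intros Hm G1 G2 G1' G2' HC1 HC2 S1 S2 h1 h2 dp1 dp2 K1 K2.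
  assert (HB : 0 <= K1 ^ 2 + K2 ^ 2) by nra.
  apply lim_diff_bound with (fun N => riemann_sum m (S N) (FF m c1 c2 p1 p2))
    (fun N => riemann_sum m (S N) (FF m c1' c2' p1' p2')) ((K1 ^ 2 + K2 ^ 2) * (C1 + C2)).
  apply FF_integral; auto. apply FF_integral; auto. nra.
  exists O. intros N _.
  eapply Rle_trans. apply RS_abs_diff; lia.
  eapply Rle_trans. apply RS_le. lia. intros t Ht. apply compare_pt. apply inner_box with (S N); auto; lia.
  fold dp1 dp2 K1 K2.
  assert (E : riemann_sum m (S N) (fun t => (2 * K1 * dp1 + 2 * K2 * dp2) + (K1 ^ 2 + K2 ^ 2) *
     (slab m c1' (cdist m c1 c1') t + slab m c2' (cdist m c2 c2') t)) =
     riemann_sum m (S N) (fun _ => 2 * K1 * dp1 + 2 * K2 * dp2) + (K1 ^ 2 + K2 ^ 2) *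
     (riemann_sum m (S N) (slab m c1' (cdist m c1 c1')) + riemann_sum m (S N) (slab m c2' (cdist m c2 c2')))).
  { rewrite <- RS_plus, <- RS_scal, <- RS_plus. reflexivity. }
  rewrite E, RS_const by lia.
  pose proof (cdist_nonneg m c1 c1'). pose proof (cdist_nonneg m c2 c2').
  specialize (S1 (cdist m c1 c1') (S N) ltac:(lra) ltac:(lia)).
  specialize (S2 (cdist m c2 c2') (S N) ltac:(lra) ltac:(lia)).
  assert (Hn : 0 < / INR (S N)) by (apply Rinv_0_lt_compat, INR_pos; lia).
  apply Rle_trans with (2 ^ m * (2 * K1 * dp1 + 2 * K2 * dp2) + (K1 ^ 2 + K2 ^ 2) *
    (C1 * (cdist m c1 c1' + / INR (S N)) + C2 * (cdist m c2 c2' + / INR (S N)))).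
  { apply Rplus_le_compat_l. apply Rmult_le_compat_l; auto. lra. }
  right. unfold Rdiv. ring.
Qed.

Definition stepRJ (x0 y : R) (p : R * R) : R * R := (x0 * fst p - y ^ 2 * snd p, x0 * snd p + fst p).
Fixpoint RJ (x0 y : R) (k : nat) : R * R :=
  match k with O => (1, 0) | S k' => stepRJ x0 y (RJ x0 y k') end.
Definition Rk x0 y k := fst (RJ x0 y k).
Definition Jk x0 y k := snd (RJ x0 y k).
Fixpoint Mk (x0 y : R) (k : nat) : R :=
  match k with O => 0 | S k' => x0 * Mk x0 y k' - INR (S k') * Jk x0 y k' end.

Lemma Rk_S x0 y k : Rk x0 y (S k) = x0 * Rk x0 y k - y ^ 2 * Jk x0 y k.
Proof. reflexivity. Qed.
Lemma Jk_S x0 y k : Jk x0 y (S k) = x0 * Jk x0 y k + Rk x0 y k.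
Proof. reflexivity. Qed.

Lemma cpow_RJ x0 y k : cpow (x0, y) k = (Rk x0 y k, y * Jk x0 y k).
Proof.
  induction k; simpl. unfold Rk, Jk; simpl. f_equal; ring.
  rewrite IHk. unfold cmul; simpl. rewrite Rk_S, Jk_S. f_equal; ring.
Qed.

Lemma Mk_id x0 y k : INR k * Rk x0 y k - x0 * Jk x0 y k = y ^ 2 * Mk x0 y k.
Proof.
  induction k. unfold Rk, Jk; simpl; ring.
  replace (y ^ 2 * Mk x0 y (S k)) with (x0 * (y ^ 2 * Mk x0 y k) - INR (S k) * y ^ 2 * Jk x0 y k) by (cbn [Mk]; ring).
  rewrite <- IHk, Rk_S, Jk_S, S_INR. ring.
Qed.

Lemma Rk0 x0 k : Rk x0 0 k = x0 ^ k.
Proof. induction k. reflexivity. rewrite Rk_S, IHk. simpl; ring. Qed.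
Lemma Jk0 x0 k : Jk x0 0 k = INR k * x0 ^ (k - 1).
Proof.
  induction k. unfold Jk; simpl; ring.
  rewrite Jk_S, IHk, Rk0. destruct k. simpl; ring.
  replace (S (S k) - 1)%nat with (S k) by lia. replace (S k - 1)%nat with k by lia.
  rewrite !S_INR. simpl. ring.
Qed.

Definition cf1 x0 y k := x0 * Jk x0 y (S k) - Rk x0 y (S k).
Definition cf2 x0 y k := Jk x0 y (S k).
Definition cp1 x0 y k := INR (S k) * Jk x0 y k.
Definition cp2 x0 y k := y * Mk x0 y k.

Lemma sumC1_eq m g : sumC1 m g = (sumR1 m (fun k => fst (g k)), sumR1 m (fun k => snd (g k))).
Proof. induction m; simpl; auto. rewrite IHm. unfold cadd; simpl; auto. Qed.

Lemma cnorm_sq a b : cnorm (a, b) ^ 2 = a ^ 2 + b ^ 2.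
Proof. unfold cnorm; simpl fst; simpl snd. apply pow2_sqrt. nra. Qed.
Lemma cnorm_real a : cnorm (a, 0) = Rabs a.
Proof. unfold cnorm; simpl fst; simpl snd. rewrite <- sqrt_Rsqr_abs. f_equal. unfold Rsqr; ring. Qed.

Lemma Dz_ok_eq n x0 y t : y <> 0 ->
  Dz_ok n (x0, y) t = andb (box_ok (n - 1) t)
     (andb (rle (Rabs (lin (n - 1) (cf1 x0 y) t)) 1) (rle (Rabs (lin (n - 1) (cf2 x0 y) t)) 1)).
Proof.
  intros Hy. unfold Dz_ok. cbv zeta. set (m := (n - 1)%nat). f_equal. f_equal.
  - f_equal. rewrite sumC1_eq. unfold cmul. simpl fst. simpl snd.
    set (S1 := sumR1 m _). set (S2 := sumR1 m _).
    assert (H1 : S1 = sumR1 m (fun k => t k * (Rk x0 y k - Jk x0 y (S k)))).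
    { unfold S1. apply sumR1_ext; intros k Hk. rewrite !cpow_RJ. unfold Im; simpl. rewrite Jk_S. field; auto. }
    assert (H2 : S2 = sumR1 m (fun k => t k * (y * Jk x0 y k))).
    { unfold S2. apply sumR1_ext; intros k Hk. rewrite !cpow_RJ. simpl. ring. }
    assert (E1 : x0 * S1 - y * S2 = - lin m (cf1 x0 y) t).
    { rewrite H1, H2, <- !sumR1_scal, <- sumR1_minus. unfold lin. rewrite <- (Rmult_1_l (sumR1 m (fun k => cf1 x0 y k * t k))).
      rewrite Ropp_mult_distr_l, <- sumR1_scal. apply sumR1_ext; intros k Hk.
      unfold cf1. rewrite Rk_S, Jk_S. ring. }
    assert (E2 : x0 * S2 + y * S1 = 0).
    { rewrite H1, H2, <- !sumR1_scal, <- sumR1_plus.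
      replace 0 with (sumR1 m (fun _ => 0)). apply sumR1_ext; intros k Hk. rewrite Jk_S. ring.
      clear; induction m; simpl; auto; rewrite IHm; ring. }
    rewrite E1, E2, cnorm_real, Rabs_Ropp. auto.
  - f_equal. unfold lin, cf2. unfold Im at 1. simpl snd. rewrite <- sumR1_scal.
    f_equal. apply sumR1_ext; intros k Hk. rewrite cpow_RJ. unfold Im; simpl. field; auto.
Qed.

Lemma psi_integrand_eq n x0 y t : y <> 0 ->
  psi_integrand n (x0, y) t = y ^ 2 * (lin (n - 1) (cp1 x0 y) t ^ 2 + lin (n - 1) (cp2 x0 y) t ^ 2).
Proof.
  intros Hy. unfold psi_integrand. cbv zeta. set (m := (n - 1)%nat).
  rewrite sumC1_eq, cnorm_sq. unfold cscal, csub, cofR. cbn [fst snd].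
  rewrite (sumR1_ext m (fun k => t k * (INR (S k) * snd (cpow (x0, y) k) - 0)) (fun k => y * (cp1 x0 y k * t k))).
  rewrite (sumR1_ext m _ (fun k => y * (cp2 x0 y k * t k))).
  rewrite !sumR1_scal. unfold lin. ring.
  - intros k Hk. rewrite !cpow_RJ. unfold Im; cbn [fst snd].
    unfold cp2. replace (y * Jk x0 y (S k) / y) with (Jk x0 y (S k)) by (field; auto).
    rewrite Jk_S. replace (INR (S k) * Rk x0 y k - (x0 * Jk x0 y k + Rk x0 y k)) with
      (INR k * Rk x0 y k - x0 * Jk x0 y k) by (rewrite S_INR; ring).
    rewrite Mk_id. ring.
  - intros k Hk. rewrite !cpow_RJ. unfold cp1. cbn [fst snd]. ring.
Qed.
Lemma cont_plus f g : continuity f -> continuity g -> continuity (fun y => f y + g y).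
Proof. intros; exact (continuity_plus f g H H0). Qed.
Lemma cont_minus f g : continuity f -> continuity g -> continuity (fun y => f y - g y).
Proof. intros; exact (continuity_minus f g H H0). Qed.
Lemma cont_mult f g : continuity f -> continuity g -> continuity (fun y => f y * g y).
Proof. intros; exact (continuity_mult f g H H0). Qed.
Lemma cont_const c : continuity (fun _ => c).
Proof. apply continuity_const. intros x y; auto. Qed.
Lemma cont_id : continuity (fun y => y).
Proof. exact (derivable_continuous id derivable_id). Qed.
Lemma cont_abs f : continuity f -> continuity (fun y => Rabs (f y)).
Proof. intros; exact (continuity_comp f Rabs H Rcontinuity_abs). Qed.

Lemma cont_RJ x0 k : continuity (fun y => Rk x0 y k) /\ continuity (fun y => Jk x0 y k).
Proof.
  induction k as [|k [IH1 IH2]].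
  - split; [change (continuity (fun _ => 1)) | change (continuity (fun _ => 0))]; apply cont_const.
  - split.
    + change (continuity (fun y => x0 * Rk x0 y k - (y * (y * 1)) * Jk x0 y k)).
      apply cont_minus. apply cont_mult; auto; apply cont_const.
      apply cont_mult; auto. apply cont_mult. apply cont_id. apply cont_mult. apply cont_id. apply cont_const.
    + change (continuity (fun y => x0 * Jk x0 y k + Rk x0 y k)).
      apply cont_plus; auto. apply cont_mult; auto; apply cont_const.
Qed.

Lemma cont_Mk x0 k : continuity (fun y => Mk x0 y k).
Proof.
  induction k. change (continuity (fun _ => 0)); apply cont_const.
  change (continuity (fun y => x0 * Mk x0 y k - INR (S k) * Jk x0 y k)).
  apply cont_minus. apply cont_mult; auto; apply cont_const.
  apply cont_mult. apply cont_const. apply (cont_RJ x0 k).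
Qed.

Lemma cont_cdist m (c : R -> nat -> R) : (forall k, continuity (fun y => c y k)) ->
  continuity (fun y => cdist m (c y) (c 0)).
Proof.
  intros H. unfold cdist. induction m; simpl.
  - change (continuity (fun _ => 0)); apply cont_const.
  - apply cont_plus; auto. apply cont_abs. apply cont_minus; auto. apply cont_const.
Qed.

Lemma cdist_self m c : cdist m c c = 0.
Proof. unfold cdist; induction m; simpl; auto. rewrite IHm. unfold Rminus; rewrite Rplus_opp_r, Rabs_R0; ring. Qed.

Lemma cont_eps f : continuity f -> forall e, 0 < e -> exists d, 0 < d /\
  forall y, y <> 0 -> Rabs y < d -> Rabs (f y - f 0) < e.
Proof.
  intros Hf e He. destruct (Hf 0 e He) as [a [Ha H]]. exists a. split; auto.
  intros y Hy1 Hy2. apply (H y). split. split; [exact I| auto].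
  simpl. unfold Rdist. rewrite Rminus_0_r; auto.
Qed.

Definition Dsum m x0 y :=
  cdist m (cf1 x0 y) (cf1 x0 0) + cdist m (cf2 x0 y) (cf2 x0 0) +
  cdist m (cp1 x0 y) (cp1 x0 0) + cdist m (cp2 x0 y) (cp2 x0 0).

Lemma Dsum_small m x0 e : 0 < e -> exists d, 0 < d /\ forall y, y <> 0 -> Rabs y < d -> Dsum m x0 y < e.
Proof.
  intros He. assert (Hc : continuity (fun y => Dsum m x0 y)).
  { unfold Dsum. repeat apply cont_plus; apply cont_cdist; intros k.
    - unfold cf1. apply cont_minus. apply cont_mult. apply cont_const. apply (cont_RJ x0 (S k)). apply (cont_RJ x0 (S k)).
    - unfold cf2. apply (cont_RJ x0 (S k)).
    - unfold cp1. apply cont_mult. apply cont_const. apply (cont_RJ x0 k).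
    - unfold cp2. apply cont_mult. apply cont_id. apply cont_Mk. }
  destruct (cont_eps _ Hc e He) as [d [Hd H]]. exists d; split; auto.
  intros y Hy1 Hy2. specialize (H y Hy1 Hy2). unfold Dsum at 2 in H. rewrite !cdist_self in H.
  rewrite !Rplus_0_r, Rminus_0_r in H. apply Rabs_def2 in H. lra.
Qed.
Lemma lin_cf1_0 m x0 t : lin m (cf1 x0 0) t = sumR1 m (fun k => INR k * t k * x0 ^ S k).
Proof. unfold lin; apply sumR1_ext; intros k Hk. unfold cf1. rewrite Rk0, Jk0.
  replace (S k - 1)%nat with k by lia. rewrite S_INR; simpl; ring. Qed.
Lemma lin_cf2_0 m x0 t : lin m (cf2 x0 0) t = sumR1 m (fun k => INR (S k) * t k * x0 ^ k).
Proof. unfold lin; apply sumR1_ext; intros k Hk. unfold cf2. rewrite Jk0.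
  replace (S k - 1)%nat with k by lia. ring. Qed.
Lemma lin_cp1_0 m x0 t : lin m (cp1 x0 0) t = sumR1 m (fun k => INR k * INR (S k) * t k * x0 ^ (k - 1)).
Proof. unfold lin; apply sumR1_ext; intros k Hk. unfold cp1. rewrite Jk0. ring. Qed.
Lemma lin_cp2_0 m x0 t : lin m (cp2 x0 0) t = 0.
Proof. unfold lin, cp2. induction m; simpl; auto. rewrite IHm; ring. Qed.

Lemma A_eq n x0 : A_const n x0 = box_integral (n - 1) (FF (n - 1) (cf1 x0 0) (cf2 x0 0) (cp1 x0 0) (cp2 x0 0)).
Proof.
  unfold A_const. f_equal. apply functional_extensionality; intros t.
  unfold Dtilde_ok, FF. cbv zeta.
  rewrite lin_cf1_0, lin_cf2_0, lin_cp1_0, lin_cp2_0.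
  destruct (andb _ _); auto. rewrite pow2_abs. ring.
Qed.

Lemma FF_nonneg m c1 c2 p1 p2 t : 0 <= FF m c1 c2 p1 p2 t.
Proof. unfold FF. destruct (andb _ _); [nra| lra]. Qed.

Lemma prodR1_const m c : prodR1 m (fun _ => c) = c ^ m.
Proof. induction m; simpl; auto. rewrite IHm; ring. Qed.

Lemma F0_lower m x0 I : (1 <= m)%nat ->
  Un_cv (fun N => riemann_sum m (S N) (FF m (cf1 x0 0) (cf2 x0 0) (cp1 x0 0) (cp2 x0 0))) I ->
  exists L0, 0 < L0 /\ L0 <= I.
Proof.
  intros Hm HI.
  set (K1 := sumabs m (cf1 x0 0)). set (K2 := sumabs m (cf2 x0 0)). set (P := sumabs m (cp1 x0 0)).
  assert (HK1 : 0 <= K1) by apply sumabs_nonneg. assert (HK2 : 0 <= K2) by apply sumabs_nonneg.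
  assert (HP : 0 <= P) by apply sumabs_nonneg.
  set (rho := / (2 * (1 + K1 + K2))). set (rho' := rho / (2 * (1 + P))).
  assert (Hr : 0 < rho) by (unfold rho; apply Rinv_0_lt_compat; lra).
  assert (Hr2 : rho <= / 2).
  { unfold rho. apply Rinv_le_contravar; lra. }
  assert (HK1r : K1 * rho <= 1).
  { unfold rho. replace (K1 * / (2 * (1 + K1 + K2))) with (K1 / (2 * (1 + K1 + K2))) by auto.
    apply Rmult_le_reg_r with (2 * (1 + K1 + K2)); [lra|]. unfold Rdiv. rewrite Rmult_assoc, Rinv_l by lra. lra. }
  assert (HK2r : K2 * rho <= 1).
  { unfold rho. replace (K2 * / (2 * (1 + K1 + K2))) with (K2 / (2 * (1 + K1 + K2))) by auto.
    apply Rmult_le_reg_r with (2 * (1 + K1 + K2)); [lra|]. unfold Rdiv. rewrite Rmult_assoc, Rinv_l by lra. lra. }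
  assert (Hr' : 0 < rho') by (unfold rho'; apply Rdiv_lt_0_compat; lra).
  assert (HPr : P * rho' <= rho / 2).
  { unfold rho'. assert (P * (rho / (2 * (1 + P))) = rho / 2 * (P / (1 + P))) by (field; lra).
    rewrite H. assert (P / (1 + P) <= 1).
    { apply Rmult_le_reg_r with (1 + P); [lra|]. unfold Rdiv; rewrite Rmult_assoc, Rinv_l by lra. lra. }
    assert (0 <= P / (1 + P)) by (apply Rmult_le_pos; [lra| left; apply Rinv_0_lt_compat; lra]). nra. }
  assert (Hr'2 : rho' <= rho / 2).
  { unfold rho'. apply Rmult_le_reg_r with (2 * (1 + P)); [lra|]. unfold Rdiv.
    rewrite Rmult_assoc, Rinv_l by lra. nra. }
  set (a := fun k => if Nat.eqb k 1 then rho / 2 else - rho').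
  set (b := fun k => if Nat.eqb k 1 then rho else rho').
  set (phi := fun k s => ind (rle (a k) s && rle s (b k))).
  set (kappa := rho ^ 2 / 4).
  assert (Hkap : 0 < kappa) by (unfold kappa; nra).
  assert (PW : forall t, inner 1 m t -> True) by auto.
  assert (Pt : forall N t, (1 <= N)%nat -> inner N m t ->
     kappa * prodR1 m (fun k => phi k (t k)) <= FF m (cf1 x0 0) (cf2 x0 0) (cp1 x0 0) (cp2 x0 0) t).
  { intros N t HN Ht.
    destruct (prodR1_ind m (fun k => rle (a k) (t k) && rle (t k) (b k))) as [[Hp Hall]|Hp];
      change (prodR1 m (fun k => phi k (t k))) with (prodR1 m (fun k => ind (rle (a k) (t k) && rle (t k) (b k)))).
    2: { rewrite Hp, Rmult_0_r. apply FF_nonneg. }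
    rewrite Hp, Rmult_1_r.
    assert (Hk : forall k, (1 <= k <= m)%nat -> a k <= t k <= b k).
    { intros k Hk. specialize (Hall k Hk). apply andb_prop in Hall as [h1 h2].
      apply rle_true in h1; apply rle_true in h2; auto. }
    assert (Hab : forall k, (1 <= k <= m)%nat -> Rabs (t k) <= rho).
    { intros k Hk'. specialize (Hk k Hk'). unfold a, b in Hk. apply Rabs_le.
      destruct (Nat.eqb k 1); lra. }
    assert (Hab' : forall k, (1 <= k <= m)%nat -> Rabs (upd t 1 0 k) <= rho').
    { intros k Hk'. destruct (Nat.eq_dec k 1). subst; rewrite upd_eq, Rabs_R0; lra.
      rewrite upd_neq by auto. specialize (Hk k Hk'). unfold a, b in Hk.
      rewrite (proj2 (Nat.eqb_neq k 1) n) in Hk. apply Rabs_le; lra. }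
    assert (Ht1 : rho / 2 <= t 1%nat).
    { specialize (Hk 1%nat ltac:(lia)). unfold a in Hk. simpl in Hk. lra. }
    unfold FF. rewrite box_ok_true by (intros k Hk'; specialize (Hab k Hk'); lra).
    pose proof (lin_bound m (cf1 x0 0) t rho Hab). pose proof (lin_bound m (cf2 x0 0) t rho Hab).
    fold K1 K2 in H, H0.
    rewrite (proj2 (rle_true _ _)) by lra. rewrite (proj2 (rle_true _ _)) by lra. simpl andb.
    rewrite (lin_split m (cp1 x0 0)) by auto.
    assert (Hc : cp1 x0 0 1%nat = 2) by (unfold cp1; rewrite Jk0; simpl; ring).
    rewrite Hc. pose proof (lin_bound m (cp1 x0 0) (upd t 1 0) rho' Hab'). fold P in H1.
    apply Rabs_le_inv in H1.
    assert (2 * t 1%nat + lin m (cp1 x0 0) (upd t 1 0) >= rho / 2) by lra.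
    unfold kappa. nra. }
  set (L0 := kappa * (rho' / 2) ^ m).
  exists L0. split. unfold L0. apply Rmult_lt_0_compat; auto. apply pow_lt; lra.
  apply lim_ge with (fun N => riemann_sum m (S N) (FF m (cf1 x0 0) (cf2 x0 0) (cp1 x0 0) (cp2 x0 0))); auto.
  destruct (small_tail 2 (rho' / 4) ltac:(lra) ltac:(lra)) as [N0 HN0]. exists N0. intros N HN.
  eapply Rle_trans. 2: { apply RS_le. lia. intros t Ht. apply (Pt (S N)); auto; lia. }
  rewrite RS_scal. unfold L0. apply Rmult_le_compat_l; [lra|].
  unfold riemann_sum. unfold phi at 1. rewrite (gsum_prod m (S N) (fun k s => ind (rle (a k) s && rle s (b k)))).
  rewrite prodR1_scal, <- prodR1_const. apply prodR1_le. intros k Hk. split; [lra|].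
  specialize (HN0 N HN).
  assert (Hab : b k - a k >= rho').
  { unfold a, b. destruct (Nat.eqb k 1); lra. }
  eapply Rle_trans. 2: { apply cnt_lower. lia. unfold a; destruct (Nat.eqb k 1); lra. unfold b; destruct (Nat.eqb k 1); lra. }
  lra.
Qed.
Lemma sumR1_zero m : sumR1 m (fun _ => 0) = 0.
Proof. induction m; simpl; auto. rewrite IHm; ring. Qed.

Lemma cf1_0 x0 k : cf1 x0 0 k = INR k * x0 ^ S k.
Proof. unfold cf1. rewrite Rk0, Jk0. replace (S k - 1)%nat with k by lia. rewrite S_INR; simpl; ring. Qed.
Lemma cf2_0 x0 k : cf2 x0 0 k = INR (S k) * x0 ^ k.
Proof. unfold cf2. rewrite Jk0. replace (S k - 1)%nat with k by lia. ring. Qed.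

Lemma x0_cases m x0 : x0 <> 0 \/ (sumabs m (cf1 x0 0) = 0 /\ sumabs m (cf2 x0 0) = 0).
Proof.
  destruct (Req_dec x0 0) as [->|]; [right|left; auto]. split; unfold sumabs.
  - rewrite (sumR1_ext m _ (fun _ => 0)). apply sumR1_zero.
    intros k Hk. rewrite cf1_0. simpl. rewrite Rmult_0_l, Rmult_0_r, Rabs_R0; auto.
  - rewrite (sumR1_ext m _ (fun _ => 0)). apply sumR1_zero.
    intros k Hk. rewrite cf2_0. destruct k; [lia|]. simpl. rewrite Rmult_0_l, Rmult_0_r, Rabs_R0; auto.
Qed.

Lemma sumabs_tri m c c' : sumabs m c <= sumabs m c' + cdist m c c'.
Proof.
  unfold sumabs, cdist. rewrite <- sumR1_plus. apply sumR1_le. intros k Hk.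
  pose proof (Rabs_triang (c k - c' k) (c' k)). replace (c k - c' k + c' k) with (c k) in H by ring. lra.
Qed.

Theorem proposition2 (n : nat) (x0 : R) :
  (2 <= n)%nat ->
  forall eps : R, 0 < eps ->
  exists delta : R, 0 < delta /\
    forall y : R, y <> 0 -> Rabs y < delta ->
      Rabs (psi n x0 y - A_const n x0 * Rabs y) <= eps * (A_const n x0 * Rabs y).
Proof.
  intros Hn eps He.
  assert (Hm : (1 <= n - 1)%nat) by lia.
  rewrite A_eq. unfold psi. set (m := (n - 1)%nat) in *.
  assert (G1' : good m (cf1 x0 0)).
  { destruct (x0_cases m x0) as [h|[h _]]. left. rewrite cf1_0. simpl. intro; apply h; nra.
    right; lra. }
  assert (G2' : good m (cf2 x0 0)).
  { destruct (x0_cases m x0) as [h|[_ h]]. left. rewrite cf2_0. simpl. intro; apply h; nra.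
    right; lra. }
  set (I0 := box_integral m (FF m (cf1 x0 0) (cf2 x0 0) (cp1 x0 0) (cp2 x0 0))).
  assert (HI0 := FF_integral m _ _ (cp1 x0 0) (cp2 x0 0) Hm G1' G2'). fold I0 in HI0.
  destruct (F0_lower m x0 I0 Hm HI0) as [L0 [HL0 HL0I]].
  destruct (slab_bound m _ Hm G1') as [C1 [e1 [HC1 [He1 S1]]]].
  destruct (slab_bound m _ Hm G2') as [C2 [e2 [HC2 [He2 S2]]]].
  set (P1 := sumabs m (cp1 x0 0)). set (P2 := sumabs m (cp2 x0 0)).
  assert (HP1 : 0 <= P1) by apply sumabs_nonneg. assert (HP2 : 0 <= P2) by apply sumabs_nonneg.
  set (Lam := 2 ^ m * (2 * (P1 + 1) + 2 * (P2 + 1)) + ((P1 + 1) ^ 2 + (P2 + 1) ^ 2) * (C1 + C2)).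
  assert (H2m : 0 < 2 ^ m) by (apply pow_lt; lra).
  assert (HLam : 0 <= Lam) by (unfold Lam; apply Rplus_le_le_0_compat; [nra| apply Rmult_le_pos; nra]).
  set (D0 := Rmin (1/2) (Rmin e1 (Rmin e2 (eps * L0 / (Lam + 1))))).
  assert (HD0 : 0 < D0).
  { unfold D0. repeat apply Rmin_pos; try lra. apply Rdiv_lt_0_compat; nra. }
  destruct (Dsum_small m x0 D0 HD0) as [delta [Hdelta Hd]].
  exists delta. split; auto. intros y Hy Hyd.
  specialize (Hd y Hy Hyd).
  pose proof (cdist_nonneg m (cf1 x0 y) (cf1 x0 0)) as n1.
  pose proof (cdist_nonneg m (cf2 x0 y) (cf2 x0 0)) as n2.
  pose proof (cdist_nonneg m (cp1 x0 y) (cp1 x0 0)) as n3.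
  pose proof (cdist_nonneg m (cp2 x0 y) (cp2 x0 0)) as n4.
  unfold Dsum in Hd.
  assert (D0a : D0 <= 1/2) by apply Rmin_l.
  assert (D0b : D0 <= e1) by (eapply Rle_trans; [apply Rmin_r| apply Rmin_l]).
  assert (D0c : D0 <= e2) by (eapply Rle_trans; [apply Rmin_r| eapply Rle_trans; [apply Rmin_r| apply Rmin_l]]).
  assert (D0d : D0 <= eps * L0 / (Lam + 1)) by
    (eapply Rle_trans; [apply Rmin_r| eapply Rle_trans; [apply Rmin_r| apply Rmin_r]]).
  assert (G1 : good m (cf1 x0 y)).
  { left. unfold cf1, Jk, Rk. simpl. intro h. apply Hy. nra. }
  assert (G2 : good m (cf2 x0 y)).
  { destruct (x0_cases m x0) as [h|[_ h]].
    - left. unfold cf2, Jk. simpl. intro h'. apply h. lra.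
    - right. pose proof (sumabs_tri m (cf2 x0 y) (cf2 x0 0)). lra. }
  assert (HIy := FF_integral m _ _ (cp1 x0 y) (cp2 x0 y) Hm G1 G2).
  set (Iy := box_integral m (FF m (cf1 x0 y) (cf2 x0 y) (cp1 x0 y) (cp2 x0 y))) in *.
  assert (Cmp := FF_compare m (cf1 x0 y) (cf2 x0 y) (cp1 x0 y) (cp2 x0 y)
                 (cf1 x0 0) (cf2 x0 0) (cp1 x0 0) (cp2 x0 0) C1 e1 C2 e2 Hm G1 G2 G1' G2' HC1 HC2 S1 S2
                 ltac:(lra) ltac:(lra)).
  cbv zeta in Cmp. fold Iy I0 P1 P2 in Cmp.
  set (D := cdist m (cf1 x0 y) (cf1 x0 0) + cdist m (cf2 x0 y) (cf2 x0 0) +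
     cdist m (cp1 x0 y) (cp1 x0 0) + cdist m (cp2 x0 y) (cp2 x0 0)) in Hd.
  assert (Bnd : Rabs (Iy - I0) <= Lam * D).
  { eapply Rle_trans. apply Cmp.
    set (d1 := cdist m (cf1 x0 y) (cf1 x0 0)) in *. set (d2 := cdist m (cf2 x0 y) (cf2 x0 0)) in *.
    set (q1 := cdist m (cp1 x0 y) (cp1 x0 0)) in *. set (q2 := cdist m (cp2 x0 y) (cp2 x0 0)) in *.
    assert (HDe : D = d1 + d2 + q1 + q2) by reflexivity.
    assert (HD : D <= 1/2) by lra.
    assert (a1 : 2 * (P1 + q1) * q1 <= 2 * (P1 + 1) * D) by (apply Rmult_le_compat; nra).
    assert (a2 : 2 * (P2 + q2) * q2 <= 2 * (P2 + 1) * D) by (apply Rmult_le_compat; nra).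
    assert (a3 : (P1 + q1) ^ 2 + (P2 + q2) ^ 2 <= (P1 + 1) ^ 2 + (P2 + 1) ^ 2) by nra.
    assert (a4 : C1 * d1 + C2 * d2 <= (C1 + C2) * D) by nra.
    assert (a5 : ((P1 + q1) ^ 2 + (P2 + q2) ^ 2) * (C1 * d1 + C2 * d2) <=
                 ((P1 + 1) ^ 2 + (P2 + 1) ^ 2) * ((C1 + C2) * D)).
    { apply Rmult_le_compat; auto; nra. }
    unfold Lam. nra. }
  assert (LD : Lam * D <= eps * L0).
  { apply Rle_trans with (Lam * (eps * L0 / (Lam + 1))). apply Rmult_le_compat_l; lra.
    unfold Rdiv. apply Rmult_le_reg_r with (Lam + 1). lra.
    replace (Lam * (eps * L0 * / (Lam + 1)) * (Lam + 1)) with (Lam * (eps * L0)) by (field; lra).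
    nra. }
  assert (Fun : (fun t => if Dz_ok n (x0, y) t then psi_integrand n (x0, y) t else 0) =
                (fun t => y ^ 2 * FF m (cf1 x0 y) (cf2 x0 y) (cp1 x0 y) (cp2 x0 y) t)).
  { apply functional_extensionality; intros t. rewrite Dz_ok_eq, psi_integrand_eq by auto.
    fold m. unfold FF. destruct (andb _ _); ring. }
  rewrite Fun.
  assert (Sc : box_integral m (fun t => y ^ 2 * FF m (cf1 x0 y) (cf2 x0 y) (cp1 x0 y) (cp2 x0 y) t) = y ^ 2 * Iy).
  { apply box_integral_unique. eapply Un_cv_ext. 2: apply Un_cv_scal; apply HIy.
    intros N; simpl. rewrite RS_scal; auto. }
  rewrite Sc. unfold Im; simpl snd.
  assert (Hya : 0 < Rabs y) by (apply Rabs_pos_lt; auto).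
  replace (/ Rabs y * (y ^ 2 * Iy)) with (Rabs y * Iy).
  2: { rewrite <- pow2_abs. field. lra. }
  replace (Rabs y * Iy - I0 * Rabs y) with (Rabs y * (Iy - I0)) by ring.
  rewrite Rabs_mult, Rabs_Rabsolu.
  replace (eps * (I0 * Rabs y)) with (Rabs y * (eps * I0)) by ring.
  apply Rmult_le_compat_l. lra. nra.
Qed.
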